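(* For integers $k\ge0$ put $\zeta(-k|z)=-\frac{B_{k+1}(z)}{k+1}$, and for $r\ge2$ and integers $k_1,\ldots,k_r\ge0$ define recursively \[ \zeta(-k_1,\ldots,-k_r|z)=-\frac{1}{k_r+1}\zeta(-k_1,\ldots,-k_{r-2},-k_{r-1}-k_r-1|z)-\frac12\zeta(-k_1,\ldots,-k_{r-2},-k_{r-1}-k_r|z) \] \[ +\sum_{q=1}^{k_r}(-k_r)_q\frac{B_{q+1}}{(q+1)!}\zeta(-k_1,\ldots,-k_{r-2},-k_{r-1}-k_r+q|z), \] and let the depth-zero value be $1$. Then, up to addition of a function of period $1$, these are the solutions of the system of difference equations \[ V(-k_1,\ldots,-k_r|z+1)-V(-k_1,\ldots,-k_r|z)=-z^{k_1}V(-k_2,\ldots,-k_r|z+1)\qquad(r\ge1,\ k_j\ge0); \] that is, the polynomials $\zeta(-k_1,\ldots,-k_r|z)$ satisfy this system, and for each fixed tuple any solution $V(-k_1,\ldots,-k_r|z)$ of the equation with right-hand side $-z^{k_1}\zeta(-k_2,\ldots,-k_r|z+1)$ differs from $\zeta(-k_1,\ldots,-k_r|z)$ by a function of period $1$.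
   Context: $B_n(z)$ denotes the $n$-th Bernoulli polynomial and $B_n=B_n(0)$ the $n$-th Bernoulli number. $(a)_q=a(a+1)\cdots(a+q-1)$ is the Pochhammer symbol. For $r=2$ the prefix $-k_1,\ldots,-k_{r-2}$ is empty. *)

(* Defs.v *)
From mathcomp Require Import all_boot all_order all_algebra.
Set Implicit Arguments. Unset Strict Implicit. Unset Printing Implicit Defensive.
Import Order.TTheory GRing.Theory Num.Theory.
Local Open Scope ring_scope.

Section Bern.
Variable R : numFieldType.

(* bern_seq n = [:: B_0; ...; B_n], with B_0 = 1 and
   sum_{j=0}^{n} C(n+1,j) B_j = 0 for n >= 1 (so B_1 = -1/2). *)
Fixpoint bern_seq (n : nat) : seq R :=
  match n with
  | 0 => [:: 1]
  | m.+1 => let s := bern_seq m in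
      rcons s (- (\sum_(j < m.+1) 'C(m.+2, j)%:R * s`_j) / (m.+2)%:R)
  end.

Definition bernoulli (n : nat) : R := (bern_seq n)`_n.

Definition bernpoly (n : nat) (z : R) : R :=
  \sum_(j < n.+1) 'C(n, j)%:R * bernoulli j * z ^+ (n - j).

Definition poch (a : R) (q : nat) : R := \prod_(i < q) (a + i%:R).

(* zetaF n ks z : the value zeta(-k_1,...,-k_n | z) for ks = [:: k_1; ...; k_n],
   n being the depth (= size ks). *)
Fixpoint zetaF (n : nat) (ks : seq nat) (z : R) {struct n} : R :=
  match n with
  | 0 => 1
  | m.+1 =>
    match m with
    | 0 => - bernpoly (head 0%N ks).+1 z / (head 0%N ks).+1%:R
    | _.+1 =>
      let pre := take (m.-1) ks in
      let a := nth 0%N ks m.-1 in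
      let b := nth 0%N ks m in
      - (b.+1%:R)^-1 * zetaF m (rcons pre (a + b).+1%N) z
      - 2^-1 * zetaF m (rcons pre (a + b)%N) z
      + \sum_(1 <= q < b.+1)
          poch (- b%:R) q * bernoulli q.+1 / (q.+1)`!%:R
            * zetaF m (rcons pre (a + b - q)%N) z
    end
  end.

Definition zeta (ks : seq nat) (z : R) : R := zetaF (size ks) ks z.

End Bern.

(* Main.v *)
Require Import Defs.
From mathcomp Require Import all_boot all_order all_algebra ring.
Import Order.TTheory GRing.Theory Num.Theory.
Local Open Scope ring_scope.

Section S.
Variable R : numFieldType.

Lemma size_bern n : size (bern_seq R n) = n.+1.
Proof. by elim: n => //= n IH; rewrite size_rcons IH. Qed.

Lemma bern_nth n j : (j <= n)%N -> (bern_seq R n)`_j = bernoulli R j.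
Proof.
elim: n => [|n IH]; first by rewrite leqn0 => /eqP ->.
rewrite leq_eqVlt => /orP [/eqP -> //|hj].
by rewrite /= nth_rcons size_bern hj IH.
Qed.

Lemma bern_rec m : bernoulli R m.+1 =
  - (\sum_(j < m.+1) 'C(m.+2, j)%:R * bernoulli R j) / (m.+2)%:R.
Proof.
rewrite /bernoulli /= nth_rcons size_bern ltnn eqxx.
congr (- _ / _); apply: eq_bigr => j _; rewrite bern_nth //.
by rewrite -ltnS.
Qed.

Lemma bern0 : bernoulli R 0 = 1. Proof. by []. Qed.

Lemma natr_neq0 n : (n.+1%:R : R) != 0.
Proof. by rewrite pnatr_eq0. Qed.

Lemma bern_sum n : \sum_(j < n.+1) 'C(n, j)%:R * bernoulli R j =
  bernoulli R n + (n == 1%N)%:R.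
Proof.
case: n => [|[|m]]; first by rewrite big_ord1 /= bern0 mulr1 addr0.
  rewrite !big_ord_recr big_ord0 /= bern_rec big_ord1 /= bern0.
  rewrite !bin0 binn; field => //.
rewrite big_ord_recr /= binn mul1r addr0.
set S := \sum_(_ < _) _.
have -> : S = 0.
  rewrite /S big_ord_recr /= binSn bern_rec. field. by rewrite -natrD pnatr_eq0.
by rewrite add0r.
Qed.

Definition tp (c : nat -> R) n (x : R) :=
  \sum_(j < n.+1) 'C(n, j)%:R * c j * x ^+ (n - j).

Lemma binM n k i : (i <= k)%N -> (k <= n)%N ->
  ('C(n, k) * 'C(k, i) = 'C(n, i) * 'C(n - i, k - i))%N.
Proof.
move=> hik hkn.
have hpos : (0 < i`! * (k - i)`! * (n - k)`!)%N.
  by rewrite !muln_gt0 !fact_gt0.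
apply/eqP; rewrite -(eqn_pmul2r hpos); apply/eqP.
have e1 : (n - i - (k - i) = n - k)%N.
  by rewrite subnBA // subnK // (leq_trans hik).
rewrite -[in RHS]e1.
transitivity (n`!).
  rewrite -(bin_fact hkn) -(bin_fact hik). ring.
rewrite -(bin_fact (leq_trans hik hkn)) -(bin_fact (m:=k-i) (n:=n-i)); last first.
  by rewrite leq_sub2r.
ring.
Qed.

Lemma tp_shift c n x y : tp c n (x + y) =
  \sum_(k < n.+1) 'C(n, k)%:R * tp c k x * y ^+ (n - k).
Proof.
rewrite /tp.
pose F (k i : nat) := 'C(n, k)%:R * ('C(k, i)%:R * c i * x ^+ (k - i)) * y ^+ (n - k) : R.
transitivity (\sum_(k < n.+1) \sum_(i < n.+1) F k i); last first.
  apply: eq_bigr => k _.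
  rewrite big_distrr big_distrl /=.
  symmetry.
  rewrite (big_ord_widen n.+1 (F k) (ltn_ord k)) big_mkcond /=.
  apply: eq_bigr => i _; case: ifP => // /negbT; rewrite -leqNgt => hik.
  by rewrite /F (bin_small hik) !(mul0r, mulr0).
rewrite exchange_big /=; apply: eq_bigr => i _.
have hi : (i <= n)%N by rewrite -ltnS.
rewrite -(big_mkord xpredT (fun k => F k i)).
rewrite (@big_cat_nat _ _ _ i) /=; [|by []|by rewrite ltnW].
have -> : \sum_(0 <= k < i) F k i = 0.
  rewrite big_nat_cond big1 // => k /andP[/andP[_ hk] _].
  by rewrite /F (bin_small hk) !(mul0r, mulr0).
rewrite add0r.
rewrite -[X in index_iota X _](add0n i) big_addn big_mkord subSn //.
rewrite addrC exprDn big_distrr /=; apply: eq_bigr => l _.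
have hl : (l <= n - i)%N by rewrite -ltnS.
rewrite /F addnK [(l + i)%N]addnC subnDA.
have hb := binM n (i + l) i (leq_addr l i).
rewrite -(leq_subRL _ hi) in hb.
have {}hb := hb hl.
rewrite addKn in hb.
have hR : 'C(n, i + l)%:R * 'C(i + l, i)%:R = 'C(n, i)%:R * 'C(n - i, l)%:R :> R.
  by rewrite -!natrM hb.
rewrite -mulr_natr.
transitivity (('C(n, i)%:R * 'C(n - i, l)%:R) * c i * y ^+ (n - i - l) * x ^+ l); first ring.
rewrite -hR; ring.
Qed.

Lemma bp_tp n (z : R) : bernpoly n z = tp (bernoulli R) n z. Proof. by []. Qed.

Lemma bp1 n : bernpoly n (1:R) = bernoulli R n + (n == 1%N)%:R.
Proof.
rewrite -bern_sum /bernpoly; apply: eq_bigr => j _; by rewrite expr1n mulr1.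
Qed.

Lemma bp0 n : bernpoly n (0:R) = bernoulli R n.
Proof.
rewrite /bernpoly big_ord_recr /= binn subnn expr0 mul1r mulr1 big1 ?add0r //.
move=> j _; by rewrite expr0n subn_eq0 leqNgt ltn_ord /= mulr0.
Qed.

Lemma bp_diff n (z : R) : bernpoly n.+1 (z + 1) - bernpoly n.+1 z = n.+1%:R * z ^+ n.
Proof.
rewrite [z + 1]addrC bp_tp tp_shift.
under eq_bigr => k _ do rewrite -bp_tp bp1 mulrDr mulrDl.
rewrite big_split /= addrAC.
have -> : \sum_(i < n.+2) 'C(n.+1, i)%:R * bernoulli R i * z ^+ (n.+1 - i) = bernpoly n.+1 z by [].
rewrite subrr add0r !big_ord_recl /= big1 ?addr0.
  by rewrite mulr0 mul0r add0r bin1 mulr1 subSS subn0.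
by move=> j _; rewrite /= mulr0 mul0r.
Qed.

Definition dd j := (-1) ^+ j * bernpoly j (1:R) - bernoulli R j.

Lemma sign_sub n k : (k <= n)%N -> (-1) ^+ n * (-1) ^+ (n - k) = (-1) ^+ k :> R.
Proof.
move=> hk; rewrite -{1}(subnKC hk) exprD -mulrA -exprD addnn -mul2n exprM.
by rewrite sqrrN !expr1n mulr1.
Qed.

Lemma dsum n : \sum_(j < n) 'C(n, j)%:R * dd j = 0.
Proof.
have h1 := tp_shift (bernoulli R) n 1 (-1).
rewrite -bp_tp subrr bp0 in h1.
have h2 : (-1) ^+ n * bernoulli R n =
   \sum_(k < n.+1) 'C(n, k)%:R * ((-1) ^+ k * bernpoly k 1).
  rewrite h1 big_distrr /=; apply: eq_bigr => k _.
  rewrite -bp_tp -(sign_sub n k (ltnSE (ltn_ord k))); ring.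
have h3 := bern_sum n.
have h4 : \sum_(j < n.+1) 'C(n, j)%:R * dd j =
   (-1) ^+ n * bernoulli R n - (bernoulli R n + (n == 1%N)%:R).
  rewrite h2 -h3 -sumrB; apply: eq_bigr => j _; rewrite /dd; ring.
rewrite big_ord_recr /= binn mul1r in h4.
rewrite -[LHS](addrK (dd n)) h4 /dd bp1.
case: n {h1 h2 h3 h4} => [|[|m]] /=; rewrite ?expr0 ?expr1; ring.
Qed.

Lemma dzero k : dd k = 0.
Proof.
elim/ltn_ind: k => k IH.
have h := dsum k.+1.
rewrite big_ord_recr /= big1 ?add0r in h; last first.
  by move=> j _; rewrite IH ?mulr0 // ltn_ord.
rewrite binSn in h; apply/eqP; move/eqP: h; rewrite mulf_eq0 pnatr_eq0 //.
Qed.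

Lemma bern_odd k : (2 <= k)%N -> (-1) ^+ k * bernoulli R k = bernoulli R k.
Proof.
move=> hk; have := dzero k; rewrite /dd bp1.
case: k hk => [|[|k]] // _; rewrite addr0 => /eqP; rewrite subr_eq0 => /eqP //.
Qed.

Lemma poch_neg b q : (q <= b)%N -> poch (- b%:R : R) q = (-1) ^+ q * (b ^_ q)%:R.
Proof.
elim: q => [|q IH] hq; first by rewrite /poch big_ord0 expr0 mul1r.
rewrite /poch big_ord_recr /= -/(poch _ _) IH ?(ltnW hq) //.
rewrite ffactnSr natrM natrB ?(ltnW hq) // exprS; ring.
Qed.

Definition Cc a b (F : nat -> R) : R :=
  - (b.+1%:R)^-1 * F (a + b).+1%N
  - 2^-1 * F (a + b)%N
  + \sum_(1 <= q < b.+1)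
      poch (- b%:R) q * bernoulli R q.+1 / (q.+1)`!%:R * F (a + b - q)%N.

Lemma CcB a b F G : Cc a b (fun x => F x - G x) = Cc a b F - Cc a b G.
Proof.
rewrite /Cc; under eq_bigr do rewrite mulrBr.
rewrite sumrB; ring.
Qed.

Lemma CcM a b k F : Cc a b (fun x => k * F x) = k * Cc a b F.
Proof.
rewrite /Cc; under eq_bigr do rewrite mulrCA.
rewrite -big_distrr /=; ring.
Qed.

Lemma Cc_ext a b F G : (forall x, F x = G x) -> Cc a b F = Cc a b G.
Proof.
move=> h; rewrite /Cc !h; congr (_ + _); apply: eq_bigr => q _; by rewrite h.
Qed.

Lemma bern1 : bernoulli R 1 = - 2^-1.
Proof. rewrite bern_rec big_ord1 bern0 bin0 mulr1 mulNr mul1r. by field. Qed.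

Lemma key a b (z : R) :
  Cc a b (fun x => z ^+ x) = - z ^+ a * bernpoly b.+1 (z + 1) / b.+1%:R.
Proof.
rewrite -(subrK (bernpoly b.+1 z) (bernpoly b.+1 (z + 1))) bp_diff.
rewrite /Cc /bernpoly !big_ord_recl /=.
rewrite big_add1 big_mkord /=.
set T := \sum_(i < b) _.
set S := \sum_(i < b) _.
have hS : T = - z ^+ a * S / b.+1%:R.
  rewrite /S /T big_distrr big_distrl /=; apply: eq_bigr => i _.
  have hi : (i < b)%N := ltn_ord i.
  rewrite poch_neg // -[in RHS](bern_odd (i.+2)) //.
  rewrite /bump /= !add1n subSS -(addnBA a hi) exprD.
  have hC : 'C(b.+1, i.+2)%:R * (i.+2)`!%:R = b.+1%:R * (b ^_ i.+1)%:R :> R.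
    by rewrite -!natrM bin_ffact ffactSS.
  have hC' : 'C(b.+1, i.+2)%:R = b.+1%:R * (b ^_ i.+1)%:R / (i.+2)`!%:R :> R.
    rewrite -hC mulfK //; by rewrite pnatr_eq0 -lt0n fact_gt0.
  rewrite hC' !exprS.
  set f := (i.+2)`!%:R. set g := b.+1%:R.
  have hg : g != 0 by rewrite /g pnatr_eq0.
  set B := bernoulli R i.+2. set F := (b ^_ i.+1)%:R. set s := (-1) ^+ i.
  set u := z ^+ a. set v := z ^+ (b - i.+1).
  have hf : f != 0 by rewrite /f pnatr_eq0 -lt0n fact_gt0.
  have h1 : (1 + b%:R : R) != 0 by rewrite addrC natr1 pnatr_eq0.
  field. by rewrite hf h1.
rewrite hS /bump /= bern0 bern1 bin0 bin1 !subSS !subn0.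
rewrite -addnS exprD.
set u := z ^+ a. set v := z ^+ b. 
rewrite [z ^+ (a + b)]exprD -/u -/v.
set g := b.+1%:R.
have hg : g != 0 by rewrite /g pnatr_eq0.
rewrite exprS -/v.
have h2 : (2 : R) != 0 by rewrite pnatr_eq0.
field. by rewrite addrC natr1 pnatr_eq0.
Qed.

Lemma zetaF_SS m k1 ks (z : R) : zetaF m.+3 (k1 :: ks) z =
  Cc (nth 0%N ks m) (nth 0%N ks m.+1)
     (fun x => zetaF m.+2 (k1 :: rcons (take m ks) x) z).
Proof. by []. Qed.

Lemma zetaF_2 a b (z : R) : zetaF 2 [:: a; b] z =
  Cc a b (fun x => zetaF 1 [:: x] z).
Proof. by []. Qed.

Lemma zetaF_1 k ks (z : R) : zetaF 1 (k :: ks) z = - bernpoly k.+1 z / k.+1%:R.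
Proof. by []. Qed.

Lemma diff1 k ks (z : R) : zetaF 1 (k :: ks) (z + 1) - zetaF 1 (k :: ks) z = - z ^+ k.
Proof.
rewrite !zetaF_1.
transitivity (- (bernpoly k.+1 (z + 1) - bernpoly k.+1 z) / k.+1%:R); first ring.
rewrite bp_diff; field. by rewrite addrC natr1 pnatr_eq0.
Qed.

Lemma main n : forall ks k1 (z : R), size ks = n ->
  zetaF n.+1 (k1 :: ks) (z + 1) - zetaF n.+1 (k1 :: ks) z
  = - z ^+ k1 * zetaF n ks (z + 1).
Proof.
elim: n => [|n IH] ks k1 z hs.
  by rewrite diff1 /= mulr1.
case: n IH hs => [|m] IH hs.
  case: ks hs => [|b [|? ?]] // _.
  rewrite !zetaF_2 -CcB.
  rewrite (Cc_ext _ _ _ (fun x => -1 * z ^+ x)); last first.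
    by move=> x; rewrite diff1 mulN1r.
  rewrite CcM key zetaF_1; ring.
rewrite !zetaF_SS -CcB.
rewrite (Cc_ext _ _ _ (fun x => - z ^+ k1 * zetaF m.+1 (rcons (take m ks) x) (z + 1))); last first.
  move=> x; apply: IH.
  by rewrite size_rcons size_take hs ltnS leqnSn.
rewrite CcM.
have -> : zetaF m.+2 ks (z + 1) = Cc (nth 0%N ks m) (nth 0%N ks m.+1)
     (fun x => zetaF m.+1 (rcons (take m ks) x) (z + 1)) by [].
by [].
Qed.
End S.

Theorem theorem3p1 (R : numFieldType) :
  (forall (k1 : nat) (ks : seq nat) (z : R),
      zeta (k1 :: ks) (z + 1) - zeta (k1 :: ks) z
      = - z ^+ k1 * zeta ks (z + 1))
  /\
  (forall (k1 : nat) (ks : seq nat) (V : R -> R),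
      (forall z : R, V (z + 1) - V z = - z ^+ k1 * zeta ks (z + 1)) ->
      exists p : R -> R,
        (forall z : R, p (z + 1) = p z) /\
        (forall z : R, V z = zeta (k1 :: ks) z + p z)).
Proof.
have P1 : forall (k1 : nat) (ks : seq nat) (z : R),
      zeta (k1 :: ks) (z + 1) - zeta (k1 :: ks) z
      = - z ^+ k1 * zeta ks (z + 1).
  by move=> k1 ks z; rewrite /zeta /=; apply: main.
split => // k1 ks V hV.
exists (fun z => V z - zeta (k1 :: ks) z); split.
  move=> z; apply/eqP; rewrite subr_eq -addrA addrC -subr_eq hV -P1.
  by apply/eqP; ring.
by move=> z; ring.
Qed.
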